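(* Let $d,k,t\ge 0$ be integers with $t\le d$. Then $2f(k,d)\le f(k,d-t)+f(k,d+t)$.
   Context: For a graph $G=(V,E)$ and an integer $k\ge 0$, a $k$-independent set is a set $S\subseteq V$ such that the induced subgraph $G[S]$ has maximum degree at most $k$; $\alpha_k(G)$ denotes the maximum cardinality of a $k$-independent set of $G$. $n(G)$ is the number of vertices and $d(G)=2|E(G)|/n(G)$ the average degree. For integers $d,k\ge 0$, $f(k,d)=\inf\left\{\frac{\alpha_k(G)}{n(G)} : G \text{ a finite simple graph with at least one vertex and } d(G)\le d\right\}$. *)

(* Defs.v *)
From Stdlib Require Import Bool Reals Arith List ClassicalEpsilon.
Import ListNotations.
Open Scope R_scope.

(* A finite simple graph on vertex set {0, ..., gn - 1}: symmetric,
   irreflexive adjacency (values outside the range are ignored). *)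
Record graph := Graph {
  gn : nat;
  gadj : nat -> nat -> bool;
  gadj_sym : forall i j, gadj i j = gadj j i;
  gadj_irr : forall i, gadj i i = false
}.

Definition verts (G : graph) : list nat := seq 0 (gn G).

Definition deg_in (G : graph) (S : nat -> bool) (v : nat) : nat :=
  length (filter (fun u => gadj G v u && S u) (verts G)).

Definition deg (G : graph) (v : nat) : nat := deg_in G (fun _ => true) v.

(* sum of degrees = 2 |E(G)| *)
Definition sum_deg (G : graph) : nat :=
  fold_right Nat.add 0%nat (map (deg G) (verts G)).

Definition avg_deg (G : graph) : R := INR (sum_deg G) / INR (gn G).

Definition card_set (G : graph) (S : nat -> bool) : nat :=
  length (filter S (verts G)).

Definition k_independent (G : graph) (k : nat) (S : nat -> bool) : Prop :=
  forall v, (v < gn G)%nat -> S v = true -> (deg_in G S v <= k)%nat.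

Definition is_alpha_k (G : graph) (k a : nat) : Prop :=
  (exists S, k_independent G k S /\ card_set G S = a) /\
  (forall S, k_independent G k S -> (card_set G S <= a)%nat).

Definition ratios (k d : nat) (r : R) : Prop :=
  exists G : graph, (0 < gn G)%nat /\ avg_deg G <= INR d /\
    exists a, is_alpha_k G k a /\ r = INR a / INR (gn G).

Definition is_glb (E : R -> Prop) (m : R) : Prop :=
  (forall x, E x -> m <= x) /\ (forall b, (forall x, E x -> b <= x) -> b <= m).

(* f(k,d) = inf of the ratios (the infimum exists: the set is nonempty
   and bounded below by 0). *)
Definition fkd (k d : nat) : R :=
  epsilon (inhabits 0) (fun m => is_glb (ratios k d) m).

(* Main.v *)
Require Import Defs.
From Stdlib Require Import Bool Reals Arith List Lia Lra ClassicalEpsilon.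
Open Scope R_scope.

Lemma seq_shift_add (m n a : nat) : seq (a + m) n = map (fun u => (u + m)%nat) (seq a n).
Proof. revert a; induction n as [|n IH]; intros a; simpl; [reflexivity|].
  f_equal. replace (S (a + m)) with (S a + m)%nat by lia. apply IH. Qed.

Lemma len_filter_map (f : nat -> bool) (g : nat -> nat) (l : list nat) :
  length (filter f (map g l)) = length (filter (fun x => f (g x)) l).
Proof. induction l as [|x l IH]; simpl; [reflexivity|]. destruct (f (g x)); simpl; lia. Qed.

Lemma cnt_split (f : nat -> bool) (n1 n2 : nat) :
  length (filter f (seq 0 (n1 + n2))) =
  (length (filter f (seq 0 n1)) + length (filter (fun u => f (u + n1)%nat) (seq 0 n2)))%nat.
Proof. rewrite seq_app, filter_app, length_app. f_equal.
  replace (0 + n1)%nat with (0 + n1)%nat by reflexivity.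
  rewrite seq_shift_add, len_filter_map. reflexivity. Qed.

Lemma cnt_ext (f g : nat -> bool) (n : nat) : (forall u, (u < n)%nat -> f u = g u) ->
  length (filter f (seq 0 n)) = length (filter g (seq 0 n)).
Proof. intros H. f_equal. apply filter_ext_in. intros a Ha. apply in_seq in Ha. apply H; lia. Qed.

Lemma cnt_false (n : nat) : length (filter (fun _ => false) (seq 0 n)) = 0%nat.
Proof. induction (seq 0 n); simpl; auto. Qed.

Fixpoint sumL (l : list nat) : nat := match l with nil => 0%nat | x :: l => (x + sumL l)%nat end.

Lemma sumL_fr l : fold_right Nat.add 0%nat l = sumL l.
Proof. induction l; simpl; auto. Qed.

Lemma sumL_app l1 l2 : sumL (l1 ++ l2) = (sumL l1 + sumL l2)%nat.
Proof. induction l1; simpl; lia. Qed.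

Lemma sum_split (h : nat -> nat) (n1 n2 : nat) :
  sumL (map h (seq 0 (n1 + n2))) =
  (sumL (map h (seq 0 n1)) + sumL (map (fun u => h (u + n1)%nat) (seq 0 n2)))%nat.
Proof. rewrite seq_app, map_app, sumL_app. f_equal.
  rewrite seq_shift_add, map_map. reflexivity. Qed.

Lemma sum_ext (f g : nat -> nat) (n : nat) : (forall u, (u < n)%nat -> f u = g u) ->
  sumL (map f (seq 0 n)) = sumL (map g (seq 0 n)).
Proof. intros H. f_equal. apply map_ext_in. intros a Ha. apply in_seq in Ha. apply H; lia. Qed.

Definition uadj (G1 G2 : graph) (i j : nat) : bool :=
  if Nat.ltb i (gn G1) then (if Nat.ltb j (gn G1) then gadj G1 i j else false)
  else (if Nat.ltb j (gn G1) then false else gadj G2 (i - gn G1) (j - gn G1)).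

Lemma uadj_sym G1 G2 i j : uadj G1 G2 i j = uadj G1 G2 j i.
Proof. unfold uadj. destruct (Nat.ltb i (gn G1)), (Nat.ltb j (gn G1)); auto using gadj_sym. Qed.

Lemma uadj_irr G1 G2 i : uadj G1 G2 i i = false.
Proof. unfold uadj. destruct (Nat.ltb i (gn G1)); auto using gadj_irr. Qed.

Definition gunion (G1 G2 : graph) : graph :=
  Graph (gn G1 + gn G2) (uadj G1 G2) (uadj_sym G1 G2) (uadj_irr G1 G2).

Lemma ltb_t a b : (a < b)%nat -> Nat.ltb a b = true.
Proof. apply Nat.ltb_lt. Qed.
Lemma ltb_f a b : (b <= a)%nat -> Nat.ltb a b = false.
Proof. apply Nat.ltb_ge. Qed.

Lemma deg_in_ext G S S' v : (forall u, (u < gn G)%nat -> S u = S' u) ->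
  deg_in G S v = deg_in G S' v.
Proof. intros H. unfold deg_in, verts. apply cnt_ext. intros u Hu. rewrite H; auto. Qed.

Lemma deg_in_ul G1 G2 S v : (v < gn G1)%nat -> deg_in (gunion G1 G2) S v = deg_in G1 S v.
Proof. intros Hv. unfold deg_in, verts. simpl. rewrite cnt_split.
  rewrite (cnt_ext (fun u => uadj G1 G2 v (u + gn G1)%nat && S (u + gn G1)%nat) (fun _ => false)).
  - rewrite cnt_false, Nat.add_0_r. apply cnt_ext. intros u Hu. unfold uadj.
    rewrite (ltb_t _ _ Hv), (ltb_t _ _ Hu). reflexivity.
  - intros u Hu. unfold uadj. rewrite (ltb_t _ _ Hv), (ltb_f (u + gn G1)); [reflexivity|lia].
Qed.

Lemma deg_in_ur G1 G2 S v : (gn G1 <= v)%nat ->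
  deg_in (gunion G1 G2) S v = deg_in G2 (fun u => S (u + gn G1)%nat) (v - gn G1).
Proof. intros Hv. unfold deg_in, verts. simpl. rewrite cnt_split.
  rewrite (cnt_ext (fun u => uadj G1 G2 v u && S u) (fun _ => false)).
  - rewrite cnt_false. simpl. apply cnt_ext. intros u Hu. unfold uadj.
    rewrite (ltb_f v), (ltb_f (u + gn G1)) by lia. rewrite Nat.add_sub. reflexivity.
  - intros u Hu. unfold uadj. rewrite (ltb_f v), (ltb_t u) by lia. reflexivity.
Qed.

Lemma sum_deg_union G1 G2 : sum_deg (gunion G1 G2) = (sum_deg G1 + sum_deg G2)%nat.
Proof. unfold sum_deg. rewrite !sumL_fr. unfold verts. simpl. rewrite sum_split. f_equal.
  - apply sum_ext. intros u Hu. unfold deg. apply deg_in_ul; auto.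
  - apply sum_ext. intros u Hu. unfold deg. rewrite deg_in_ur by lia.
    rewrite Nat.add_sub. reflexivity.
Qed.

Lemma card_union G1 G2 S : card_set (gunion G1 G2) S =
  (card_set G1 S + card_set G2 (fun u => S (u + gn G1)%nat))%nat.
Proof. unfold card_set, verts. simpl. apply cnt_split. Qed.

Lemma card_ext G S S' : (forall u, (u < gn G)%nat -> S u = S' u) -> card_set G S = card_set G S'.
Proof. intros H. unfold card_set, verts. apply cnt_ext; auto. Qed.

Lemma alpha_union G1 G2 k a1 a2 : is_alpha_k G1 k a1 -> is_alpha_k G2 k a2 ->
  is_alpha_k (gunion G1 G2) k (a1 + a2).
Proof.
  intros [[S1 [HS1 HC1]] HU1] [[S2 [HS2 HC2]] HU2].
  set (n1 := gn G1).
  split.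
  - exists (fun u => if Nat.ltb u n1 then S1 u else S2 (u - n1)%nat). split.
    + intros v Hv Hsv. simpl in Hv. destruct (Nat.ltb v n1) eqn:E.
      * apply Nat.ltb_lt in E. rewrite deg_in_ul by exact E.
        rewrite (deg_in_ext _ _ S1). apply HS1; auto.
        intros u Hu. rewrite ltb_t; auto.
      * apply Nat.ltb_ge in E. rewrite deg_in_ur by exact E.
        rewrite (deg_in_ext _ _ S2). apply HS2; [simpl; lia| auto].
        intros u Hu. fold n1. rewrite (ltb_f (u + n1)) by lia. rewrite Nat.add_sub. reflexivity.
    + rewrite card_union. rewrite (card_ext G1 _ S1), (card_ext G2 _ S2); [lia| |].
      * intros u Hu. fold n1. rewrite (ltb_f (u + n1)) by lia. rewrite Nat.add_sub. reflexivity.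
      * intros u Hu. rewrite ltb_t; auto.
  - intros S HS. rewrite card_union.
    assert (card_set G1 S <= a1)%nat.
    { apply HU1. intros v Hv Hsv. rewrite <- (deg_in_ul G1 G2) by exact Hv.
      apply HS; auto. simpl. lia. }
    assert (card_set G2 (fun u => S (u + gn G1)%nat) <= a2)%nat.
    { apply HU2. intros v Hv Hsv.
      replace v with (v + gn G1 - gn G1)%nat by lia.
      rewrite <- (deg_in_ur G1 G2) by lia. apply HS; auto. simpl. lia. }
    lia.
Qed.

Definition gempty : graph := Graph 0 (fun _ _ => false) (fun _ _ => eq_refl) (fun _ => eq_refl).

Fixpoint copies (G : graph) (m : nat) : graph :=
  match m with O => gempty | S m => gunion G (copies G m) end.

Lemma gn_copies G m : gn (copies G m) = (m * gn G)%nat.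
Proof. induction m; simpl; auto. Qed.

Lemma sd_copies G m : sum_deg (copies G m) = (m * sum_deg G)%nat.
Proof. induction m; simpl. reflexivity. rewrite sum_deg_union, IHm. reflexivity. Qed.

Lemma alpha_copies G k a m : is_alpha_k G k a -> is_alpha_k (copies G m) k (m * a).
Proof. intros H. induction m; simpl.
  - split. exists (fun _ => false). split. intros v Hv; simpl in Hv; lia. reflexivity.
    intros S _. unfold card_set, verts. simpl. lia.
  - apply alpha_union; auto. Qed.

Definition gone : graph := Graph 1 (fun _ _ => false) (fun _ _ => eq_refl) (fun _ => eq_refl).

Lemma card_le G S : (card_set G S <= gn G)%nat.
Proof. unfold card_set, verts. rewrite <- (length_seq (gn G) 0) at 2. apply filter_length_le. Qed.

Lemma ratios_ne k d : ratios k d 1.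
Proof. exists gone. split; [simpl; lia|]. split.
  - unfold avg_deg. simpl. unfold sum_deg, deg, deg_in, verts. simpl.
    replace (0 / 1) with 0 by field. apply pos_INR.
  - exists 1%nat. split; [|simpl; field].
    split.
    + exists (fun _ => true). split.
      * intros v Hv _. unfold deg_in, verts. simpl. lia.
      * reflexivity.
    + intros S _. apply card_le.
Qed.

Lemma ratios_ge0 k d r : ratios k d r -> 0 <= r.
Proof. intros [G [Hn [_ [a [_ ->]]]]]. unfold Rdiv; apply Rmult_le_pos; [apply pos_INR|]. apply Rlt_le, Rinv_0_lt_compat.
  apply lt_0_INR; auto. Qed.

Lemma glb_exists k d : exists m, is_glb (ratios k d) m.
Proof.
  destruct (completeness (fun x => ratios k d (- x))) as [m [Hub Hl]].
  - exists 0. intros x Hx. apply ratios_ge0 in Hx. lra.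
  - exists (-1). replace (- -1) with 1 by ring. apply ratios_ne.
  - exists (- m). split.
    + intros x Hx.
      assert (- x <= m). apply Hub. rewrite Ropp_involutive; auto. lra.
    + intros b Hb. assert (m <= - b). 2: lra. apply Hl. intros x Hx.
      specialize (Hb _ Hx). lra.
Qed.

Lemma fkd_glb k d : is_glb (ratios k d) (fkd k d).
Proof. unfold fkd. apply epsilon_spec. apply glb_exists. Qed.

Lemma avg_nat G d : (0 < gn G)%nat -> avg_deg G <= INR d -> (sum_deg G <= d * gn G)%nat.
Proof. intros Hn H. unfold avg_deg in H. apply INR_le. rewrite mult_INR.
  assert (0 < INR (gn G)) by (apply lt_0_INR; auto).
  apply (Rmult_le_compat_r (INR (gn G))) in H; [|lra].
  replace (INR (sum_deg G) / INR (gn G) * INR (gn G)) with (INR (sum_deg G)) in H by (field; lra).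
  exact H. Qed.

Lemma mix k d t r1 r2 : (t <= d)%nat -> ratios k (d - t) r1 -> ratios k (d + t) r2 ->
  ratios k d ((r1 + r2) / 2).
Proof.
  intros Htd [G1 [Hn1 [Hd1 [a1 [Ha1 ->]]]]] [G2 [Hn2 [Hd2 [a2 [Ha2 ->]]]]].
  set (n1 := gn G1) in *. set (n2 := gn G2) in *.
  exists (gunion (copies G1 n2) (copies G2 n1)).
  assert (gn (gunion (copies G1 n2) (copies G2 n1)) = (n2 * n1 + n1 * n2)%nat) as Egn.
  { simpl. rewrite !gn_copies. reflexivity. }
  split; [rewrite Egn; nia|]. split.
  - apply avg_nat in Hd1; auto. apply avg_nat in Hd2; auto.
    unfold avg_deg. rewrite Egn, sum_deg_union, !sd_copies.
    fold n1 n2 in Hd1, Hd2.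
    assert ((n2 * sum_deg G1 + n1 * sum_deg G2) <= d * (n2 * n1 + n1 * n2))%nat.
    { assert (n2 * sum_deg G1 <= n2 * ((d - t) * n1))%nat by (apply Nat.mul_le_mono_l; auto).
      assert (n1 * sum_deg G2 <= n1 * ((d + t) * n2))%nat by (apply Nat.mul_le_mono_l; auto).
      clear -H H0 Htd. destruct (Nat.le_exists_sub t d Htd) as [e [He _]]. subst d.
      replace (e + t - t)%nat with e in H by lia. nia. }
    apply le_INR in H. rewrite mult_INR in H.
    assert (0 < INR (n2 * n1 + n1 * n2)) by (apply lt_0_INR; nia).
    unfold Rdiv. apply (Rmult_le_reg_r (INR (n2 * n1 + n1 * n2))); auto.
    rewrite Rmult_assoc, Rinv_l by lra. lra.
  - exists (n2 * a1 + n1 * a2)%nat. split.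
    + apply alpha_union; apply alpha_copies; auto.
    + rewrite Egn. rewrite !plus_INR, !mult_INR.
      assert (0 < INR n1) by (apply lt_0_INR; auto).
      assert (0 < INR n2) by (apply lt_0_INR; auto).
      field. assert (0 < INR n2 * INR n1) by (apply Rmult_lt_0_compat; lra). split; [nra|split; lra].
Qed.

Theorem mainTheorem3 (d k t : nat) (htd : (t <= d)%nat) :
  2 * fkd k d <= fkd k (d - t) + fkd k (d + t).
Proof.
  destruct (fkd_glb k d) as [L _].
  destruct (fkd_glb k (d - t)) as [L1 G1].
  destruct (fkd_glb k (d + t)) as [L2 G2].
  assert (H2 : forall r2, ratios k (d + t) r2 -> 2 * fkd k d - fkd k (d - t) <= r2).
  { intros r2 Hr2.
    assert (2 * fkd k d - r2 <= fkd k (d - t)). 2: lra.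
    apply G1. intros r1 Hr1. pose proof (L _ (mix k d t r1 r2 htd Hr1 Hr2)). lra. }
  apply G2 in H2. lra.
Qed.
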